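(* Let $S$ be a right ample semigroup and let $\mathcal{R}'$ be a binary relation on $S$. Then $S$ has a semigroup of straight left I-quotients $Q$ such that $S$ is embedded in $Q$ as a unary semigroup (that is, $a^*=a^{-1}a$ for all $a\in S$) and $\mathcal{R}^Q\cap(S\times S)=\mathcal{R}'$, if and only if $\mathcal{R}'$ is a left congruence on $S$ and $S$ satisfies: \begin{itemize} \item[(A1)] For all $\alpha,\beta\in S$ there exist $\gamma,\delta\in S$ such that $\gamma\,\mathcal{R}'\,\delta\,\mathcal{R}'\,\delta\beta=\gamma\alpha$ and $\alpha\beta^*=\gamma^*\alpha$. \item[(A2)] For all $\alpha,\beta,\gamma\in S$, $\gamma\alpha\,\mathcal{R}'\,\gamma\beta$ implies $\gamma^*\alpha\,\mathcal{R}'\,\gamma^*\beta$. \item[(A3)] $\mathcal{R}'\subseteq\mathcal{R}^*$. \end{itemize}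
   Context: For an element $a$ of an inverse semigroup $Q$, $a^{-1}$ is its unique inverse. A subsemigroup $S$ of an inverse semigroup $Q$ is a straight left I-order in $Q$ (and $Q$ a semigroup of straight left I-quotients of $S$) if every $q\in Q$ can be written $q=a^{-1}b$ with $a,b\in S$ and $a\,\mathcal{R}^Q\,b$, where $\mathcal{R}^Q$ is Green's $\mathcal{R}$-relation of $Q$. On a semigroup $S$: $a\,\mathcal{R}^*\,b$ iff for all $x,y\in S^1$, $xa=ya\Leftrightarrow xb=yb$; $a\,\mathcal{L}^*\,b$ iff for all $x,y\in S^1$, $ax=ay\Leftrightarrow bx=by$. $S$ is right adequate if $E(S)$ is a semilattice (commuting idempotents) and every element $a$ is $\mathcal{L}^*$-related to an idempotent, necessarily unique, denoted $a^*$. $S$ is right ample if it is right adequate and $b^*a=a(ba)^*$ for all $a,b\in S$. A left congruence is a left compatible equivalence relation. *)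

(* Defs.v *)
Definition associative {T : Type} (mul : T -> T -> T) : Prop :=
  forall a b c, mul a (mul b c) = mul (mul a b) c.

Definition idempotent {T : Type} (mul : T -> T -> T) (e : T) : Prop :=
  mul e e = e.

(* Left action of S^1 (None = adjoined identity) and right action. *)
Definition lmul1 {T : Type} (mul : T -> T -> T) (x : option T) (a : T) : T :=
  match x with Some x => mul x a | None => a end.
Definition rmul1 {T : Type} (mul : T -> T -> T) (a : T) (x : option T) : T :=
  match x with Some x => mul a x | None => a end.

Definition Rstar {T : Type} (mul : T -> T -> T) (a b : T) : Prop :=
  forall x y : option T, lmul1 mul x a = lmul1 mul y a <-> lmul1 mul x b = lmul1 mul y b.

Definition Lstar {T : Type} (mul : T -> T -> T) (a b : T) : Prop :=
  forall x y : option T, rmul1 mul a x = rmul1 mul a y <-> rmul1 mul b x = rmul1 mul b y.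

(* S is right adequate, with star a = a^* the (necessarily unique) idempotent
   L*-related to a. *)
Definition right_adequate {S : Type} (mul : S -> S -> S) (star : S -> S) : Prop :=
  associative mul /\
  (forall e f, idempotent mul e -> idempotent mul f -> mul e f = mul f e) /\
  (forall a, idempotent mul (star a) /\ Lstar mul a (star a)).

Definition right_ample {S : Type} (mul : S -> S -> S) (star : S -> S) : Prop :=
  right_adequate mul star /\
  (forall a b, mul (star b) a = mul a (star (mul b a))).

Definition is_inverse {Q : Type} (mul : Q -> Q -> Q) (a x : Q) : Prop :=
  mul (mul a x) a = a /\ mul (mul x a) x = x.

Definition inverse_semigroup {Q : Type} (mul : Q -> Q -> Q) (inv : Q -> Q) : Prop :=
  associative mul /\
  (forall a, is_inverse mul a (inv a)) /\
  (forall a x, is_inverse mul a x -> x = inv a).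

Definition greenR {Q : Type} (mul : Q -> Q -> Q) (a b : Q) : Prop :=
  (exists x : option Q, a = rmul1 mul b x) /\ (exists y : option Q, b = rmul1 mul a y).

Definition left_congruence {S : Type} (mul : S -> S -> S) (R : S -> S -> Prop) : Prop :=
  (forall a, R a a) /\ (forall a b, R a b -> R b a) /\
  (forall a b c, R a b -> R b c -> R a c) /\
  (forall a b c, R a b -> R (mul c a) (mul c b)).

Definition straight_left_Iquotients_with {S : Type} (mulS : S -> S -> S) (star : S -> S)
    (R' : S -> S -> Prop) : Prop :=
  exists (Q : Type) (mulQ : Q -> Q -> Q) (inv : Q -> Q) (f : S -> Q),
    inverse_semigroup mulQ inv /\
    (forall a b, f a = f b -> a = b) /\
    (forall a b, f (mulS a b) = mulQ (f a) (f b)) /\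
    (forall q : Q, exists a b : S, q = mulQ (inv (f a)) (f b) /\ greenR mulQ (f a) (f b)) /\
    (forall a, f (star a) = mulQ (inv (f a)) (f a)) /\
    (forall a b, greenR mulQ (f a) (f b) <-> R' a b).

(* Main.v *)
Require Import Defs.
From Stdlib Require Import ClassicalEpsilon FunctionalExtensionality PropExtensionality ProofIrrelevance.

Section InvSg.
Variable Q : Type.
Variable m : Q -> Q -> Q.
Variable i : Q -> Q.
Hypothesis HI : inverse_semigroup m i.
Local Infix "⋅" := m (at level 40, left associativity).

Lemma iA a b c : a ⋅ (b ⋅ c) = a ⋅ b ⋅ c.
Proof. apply (proj1 HI). Qed.
Lemma iL a : a ⋅ i a ⋅ a = a.
Proof. apply (proj1 (proj1 (proj2 HI) a)). Qed.
Lemma iR a : i a ⋅ a ⋅ i a = i a.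
Proof. apply (proj2 (proj1 (proj2 HI) a)). Qed.
Lemma iU a x : a ⋅ x ⋅ a = a -> x ⋅ a ⋅ x = x -> x = i a.
Proof. intros; apply (proj2 (proj2 HI)); split; auto. Qed.
Lemma ii a : i (i a) = a.
Proof. symmetry; apply iU. apply iR. apply iL. Qed.

Lemma idem_self e : e ⋅ e = e -> i e = e.
Proof. intro H; symmetry; apply iU; rewrite ?H; auto. Qed.

Lemma idem_comm e f : e ⋅ e = e -> f ⋅ f = f -> e ⋅ f = f ⋅ e.
Proof.
  intros He Hf.
  assert (G: forall e f, e ⋅ e = e -> f ⋅ f = f -> (e ⋅ f) ⋅ (e ⋅ f) = e ⋅ f).
  { clear e f He Hf. intros e f He Hf.
    set (x := i (e ⋅ f)).
    assert (Hx : f ⋅ x ⋅ e = x).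
    { unfold x; apply iU.
      - replace (e ⋅ f ⋅ (f ⋅ i (e ⋅ f) ⋅ e) ⋅ (e ⋅ f)) with (e ⋅ f ⋅ i (e ⋅ f) ⋅ (e ⋅ f)).
        apply iL.
        repeat rewrite iA. replace (e ⋅ f ⋅ f) with (e ⋅ f) by (rewrite <- iA, Hf; auto).
        rewrite <- (iA _ e e), He. repeat rewrite iA. auto.
      - replace (f ⋅ i (e ⋅ f) ⋅ e ⋅ (e ⋅ f) ⋅ (f ⋅ i (e ⋅ f) ⋅ e)) with
          (f ⋅ (i (e ⋅ f) ⋅ (e ⋅ f) ⋅ i (e ⋅ f)) ⋅ e).
        rewrite iR; auto.
        repeat rewrite iA. rewrite <- (iA _ e e), He. rewrite <- (iA _ f f), Hf. repeat rewrite iA. auto. }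
    assert (Hxx : x ⋅ x = x).
    { assert (Rx: x ⋅ (e ⋅ f) ⋅ x = x) by apply iR.
      transitivity (f ⋅ x ⋅ e ⋅ (f ⋅ x ⋅ e)). rewrite Hx; auto.
      transitivity (f ⋅ (x ⋅ (e ⋅ f) ⋅ x) ⋅ e). repeat rewrite iA; auto.
      rewrite Rx; auto. }
    assert (E : e ⋅ f = x). { rewrite <- (ii (e ⋅ f)). fold x. apply idem_self; auto. }
    rewrite E; auto. }
  assert (H1 := G e f He Hf). assert (H2 := G f e Hf He).
  assert (A : f ⋅ e = i (e ⋅ f)).
  { apply iU.
    - replace (e ⋅ f ⋅ (f ⋅ e) ⋅ (e ⋅ f)) with ((e ⋅ f) ⋅ (e ⋅ f)). rewrite H1; auto.
      repeat rewrite iA. rewrite <- (iA _ f f), Hf. rewrite <- (iA _ e e), He. auto.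
    - replace (f ⋅ e ⋅ (e ⋅ f) ⋅ (f ⋅ e)) with ((f ⋅ e) ⋅ (f ⋅ e)). rewrite H2; auto.
      repeat rewrite iA. rewrite <- (iA _ e e), He. rewrite <- (iA _ f f), Hf. auto. }
  rewrite A. symmetry. apply idem_self. auto.
Qed.

Lemma ai_idem a : a ⋅ i a ⋅ (a ⋅ i a) = a ⋅ i a.
Proof. rewrite iA, iL. auto. Qed.
Lemma ia_idem a : i a ⋅ a ⋅ (i a ⋅ a) = i a ⋅ a.
Proof. rewrite iA, iR. auto. Qed.

Lemma i_mul a b : i (a ⋅ b) = i b ⋅ i a.
Proof.
  symmetry; apply iU.
  - replace (a ⋅ b ⋅ (i b ⋅ i a) ⋅ (a ⋅ b)) with (a ⋅ ((b ⋅ i b) ⋅ (i a ⋅ a)) ⋅ b) by (repeat rewrite iA; auto).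
    rewrite (idem_comm (b ⋅ i b) (i a ⋅ a)) by (apply ai_idem || apply ia_idem).
    repeat rewrite iA. rewrite iL. rewrite <- (iA a b (i b)). rewrite <- (iA a (b ⋅ i b) b). rewrite iL. auto.
  - replace (i b ⋅ i a ⋅ (a ⋅ b) ⋅ (i b ⋅ i a)) with (i b ⋅ ((i a ⋅ a) ⋅ (b ⋅ i b)) ⋅ i a) by (repeat rewrite iA; auto).
    rewrite (idem_comm (i a ⋅ a) (b ⋅ i b)) by (apply ai_idem || apply ia_idem).
    repeat rewrite iA. rewrite iR. rewrite <- (iA (i b) (i a) a). rewrite <- (iA (i b) (i a ⋅ a) (i a)). rewrite iR. auto.
Qed.

Definition r1 (x : Q) (z : option Q) := rmul1 m x z.

Lemma greenR_iff x y : greenR m x y <-> x ⋅ i x = y ⋅ i y.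
Proof.
  split.
  - intros [[z Hz] [w Hw]].
    assert (E1 : x = y ⋅ i y ⋅ x).
    { destruct z as [z|]; simpl in Hz; subst x; [rewrite iA, iL | rewrite iL]; auto. }
    assert (E2 : y = x ⋅ i x ⋅ y).
    { destruct w as [w|]; simpl in Hw; subst y; [rewrite iA, iL | rewrite iL]; auto. }
    assert (F1 : x ⋅ i x = y ⋅ i y ⋅ (x ⋅ i x)).
    { rewrite E1 at 1. repeat rewrite iA. auto. }
    assert (F2 : y ⋅ i y = x ⋅ i x ⋅ (y ⋅ i y)).
    { rewrite E2 at 1. repeat rewrite iA. auto. }
    rewrite F1. rewrite (idem_comm (y ⋅ i y) (x ⋅ i x)) by apply ai_idem. rewrite <- F2. auto.
  - intros H. split.
    + exists (Some (i y ⋅ x)). simpl. rewrite iA, <- H, iL. auto.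
    + exists (Some (i x ⋅ y)). simpl. rewrite iA, H, iL. auto.
Qed.

Lemma greenR_left c x y : greenR m x y -> greenR m (c ⋅ x) (c ⋅ y).
Proof.
  intros [[z Hz] [w Hw]]; split.
  - exists z. destruct z as [z|]; simpl in *; rewrite Hz; auto. apply iA.
  - exists w. destruct w as [w|]; simpl in *; rewrite Hw; auto. apply iA.
Qed.

End InvSg.

Section MkInv.
Variable Q : Type.
Variable m : Q -> Q -> Q.
Variable i : Q -> Q.
Local Infix "⋅" := m (at level 40, left associativity).
Hypothesis mA : forall a b c, a ⋅ (b ⋅ c) = a ⋅ b ⋅ c.
Hypothesis L1 : forall x, x ⋅ i x ⋅ x = x.
Hypothesis L2 : forall x, i (i x) = x.
Hypothesis L3 : forall x y, i (x ⋅ y) = i y ⋅ i x.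
Hypothesis L4 : forall x y, x ⋅ i x ⋅ (y ⋅ i y) = y ⋅ i y ⋅ (x ⋅ i x).

Lemma idem_form e : e ⋅ e = e -> e = e ⋅ i e.
Proof.
  intros He.
  assert (Hi : i e ⋅ i e = i e) by (rewrite <- L3, He; auto).
  assert (E1 : e = e ⋅ i e ⋅ (i e ⋅ e)).
  { repeat rewrite mA. rewrite <- (mA e (i e) (i e)), Hi, L1. auto. }
  assert (E2 : e ⋅ i e ⋅ (i e ⋅ e) = i e).
  { transitivity (e ⋅ i e ⋅ (i e ⋅ i (i e))). rewrite L2; auto.
    rewrite L4, L2. repeat rewrite mA. rewrite <- (mA (i e) e e), He.
    transitivity (i e ⋅ i (i e) ⋅ i e). rewrite L2; auto. apply L1. }
  assert (E : e = i e) by (rewrite E1 at 1; auto).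
  rewrite <- E, He. auto.
Qed.

Lemma mk_inverse : inverse_semigroup m i.
Proof.
  assert (IC : forall e f, e ⋅ e = e -> f ⋅ f = f -> e ⋅ f = f ⋅ e).
  { intros e f He Hf. rewrite (idem_form e He), (idem_form f Hf). apply L4. }
  split; [|split].
  - exact mA.
  - intros a; split. apply L1. rewrite <- (L2 a) at 2. apply L1.
  - intros a x [H1 H2].
    assert (I1 : x ⋅ a ⋅ (x ⋅ a) = x ⋅ a) by (rewrite mA, H2; auto).
    assert (I2 : a ⋅ x ⋅ (a ⋅ x) = a ⋅ x) by (rewrite mA, H1; auto).
    assert (I3 : i a ⋅ a ⋅ (i a ⋅ a) = i a ⋅ a).
    { rewrite mA. rewrite <- (L2 a) at 2. rewrite L1. auto. }
    assert (I4 : a ⋅ i a ⋅ (a ⋅ i a) = a ⋅ i a) by (rewrite mA, L1; auto).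
    assert (iaL : i a ⋅ a ⋅ i a = i a).
    { transitivity (i a ⋅ i (i a) ⋅ i a). rewrite L2; auto. apply L1. }
    assert (X1 : x = i a ⋅ a ⋅ x).
    { transitivity (x ⋅ a ⋅ (i a ⋅ a) ⋅ x).
      - transitivity (x ⋅ (a ⋅ i a ⋅ a) ⋅ x). rewrite L1, H2; auto. repeat rewrite mA; auto.
      - rewrite (IC _ _ I1 I3). rewrite <- (mA (i a ⋅ a) (x ⋅ a) x), H2. auto. }
    assert (X2 : i a = i a ⋅ a ⋅ x).
    { transitivity (i a ⋅ (a ⋅ x) ⋅ (a ⋅ i a)).
      - transitivity (i a ⋅ (a ⋅ x ⋅ a) ⋅ i a). rewrite H1, iaL; auto. repeat rewrite mA; auto.
      - rewrite <- (mA (i a) (a ⋅ x) (a ⋅ i a)), (IC _ _ I2 I4). repeat rewrite mA. rewrite iaL. auto. }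
    rewrite X1, <- X2. auto.
Qed.
End MkInv.

Section Ample.
Variable S : Type.
Variable mul : S -> S -> S.
Variable star : S -> S.
Variable R : S -> S -> Prop.
Hypothesis Hample : right_ample mul star.
Hypothesis HR : left_congruence mul R.
Hypothesis A1 : forall alpha beta : S, exists gamma delta : S,
      R gamma delta /\ R delta (mul delta beta) /\
      mul delta beta = mul gamma alpha /\
      mul alpha (star beta) = mul (star gamma) alpha.
Hypothesis A2 : forall alpha beta gamma : S,
      R (mul gamma alpha) (mul gamma beta) ->
      R (mul (star gamma) alpha) (mul (star gamma) beta).
Hypothesis A3 : forall a b : S, R a b -> Rstar mul a b.
Local Infix "⋅" := mul (at level 40, left associativity).

Lemma sA a b c : a ⋅ (b ⋅ c) = a ⋅ b ⋅ c.
Proof. apply (proj1 (proj1 Hample)). Qed.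
Lemma s_idem a : star a ⋅ star a = star a.
Proof. apply (proj1 ((proj2 (proj2 (proj1 Hample))) a)). Qed.
Lemma scomm a b : star a ⋅ star b = star b ⋅ star a.
Proof. apply (proj1 (proj2 (proj1 Hample))); apply s_idem. Qed.
Lemma Ls a x y : a ⋅ x = a ⋅ y -> star a ⋅ x = star a ⋅ y.
Proof. apply ((proj2 ((proj2 (proj2 (proj1 Hample))) a)) (Some x) (Some y)). Qed.
Lemma Ls1 a x : a ⋅ x = a -> star a ⋅ x = star a.
Proof. apply ((proj2 ((proj2 (proj2 (proj1 Hample))) a)) (Some x) None). Qed.
Lemma Ls1r a x : star a ⋅ x = star a -> a ⋅ x = a.
Proof. apply ((proj2 ((proj2 (proj2 (proj1 Hample))) a)) (Some x) None). Qed.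
Lemma aas a : a ⋅ star a = a.
Proof. apply Ls1r, s_idem. Qed.
Lemma amp a b : star b ⋅ a = a ⋅ star (b ⋅ a).
Proof. apply (proj2 Hample). Qed.
Lemma sle a b : star (a ⋅ b) ⋅ star b = star (a ⋅ b).
Proof. apply Ls1. rewrite <- sA, aas. auto. Qed.
Lemma sle' a b : star b ⋅ star (a ⋅ b) = star (a ⋅ b).
Proof. rewrite scomm; apply sle. Qed.
Lemma ecomm e f : e ⋅ e = e -> f ⋅ f = f -> e ⋅ f = f ⋅ e.
Proof. apply (proj1 (proj2 (proj1 Hample))). Qed.
Lemma ss a : star (star a) = star a.
Proof.
  assert (H1 := Ls1 (star a) (star a) (s_idem a)).
  assert (H2 := aas (star a)).
  assert (H3 : star a ⋅ star (star a) = star (star a) ⋅ star a).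
  { apply ecomm; apply s_idem. }
  rewrite H2 in H3. rewrite H1 in H3. auto.
Qed.

Lemma star_fix v b : star v ⋅ b = b -> star (v ⋅ b) = star b.
Proof.
  intro H. rewrite amp in H. apply Ls1 in H.
  rewrite <- (sle v b). rewrite scomm. auto.
Qed.

Lemma cancel_star a p q : a ⋅ star p = a ⋅ star q ->
  star p ⋅ star a = star p -> star q ⋅ star a = star q -> star p = star q.
Proof.
  intros H Hp Hq. apply Ls in H. rewrite scomm, Hp in H. rewrite scomm, Hq in H. auto.
Qed.

Lemma Rr a : R a a. Proof. apply (proj1 HR). Qed.
Lemma Rs a b : R a b -> R b a. Proof. apply (proj1 (proj2 HR)). Qed.
Lemma Rt a b c : R a b -> R b c -> R a c. Proof. apply (proj1 (proj2 (proj2 HR))). Qed.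
Lemma Rl a b c : R a b -> R (c ⋅ a) (c ⋅ b). Proof. apply (proj2 (proj2 (proj2 HR))). Qed.
Lemma Rst a b x y : R a b -> x ⋅ a = y ⋅ a -> x ⋅ b = y ⋅ b.
Proof. intros H; apply (A3 a b H (Some x) (Some y)). Qed.
Lemma Rst1 a b x : R a b -> x ⋅ a = a -> x ⋅ b = b.
Proof. intros H; apply (A3 a b H (Some x) None). Qed.

Definition W b c g h := R g h /\ R h (h ⋅ c) /\ h ⋅ c = g ⋅ b /\ b ⋅ star c = star g ⋅ b.

Lemma W_ex b c : exists g h, W b c g h.
Proof. apply A1. Qed.

Lemma W_gb b c g h : W b c g h -> star (g ⋅ b) = star b ⋅ star c.
Proof.
  intros (_ & _ & _ & H4). rewrite amp in H4. apply Ls in H4.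
  rewrite sle' in H4. auto.
Qed.

Lemma W_D b c g h : W b c g h -> star h ⋅ c = c ⋅ star b.
Proof.
  intros HW. assert (E := W_gb _ _ _ _ HW). destruct HW as (_ & _ & H3 & _).
  rewrite <- H3 in E. rewrite amp, E, scomm, sA, aas. auto.
Qed.

Lemma W_swap b c g h : W b c g h -> W c b h g.
Proof.
  intros HW. assert (D := W_D _ _ _ _ HW). destruct HW as (H1 & H2 & H3 & H4).
  split; [|split; [|split]]; auto.
  - apply Rs; auto.
  - rewrite <- H3. apply Rt with h; auto.
Qed.

Lemma W_Rg b c g h : W b c g h -> R g (g ⋅ b).
Proof. intros (H1 & H2 & H3 & _). rewrite <- H3. apply Rt with h; auto. Qed.

Definition eqv a b c d := star a = star c /\ forall x y, x ⋅ a = y ⋅ c <-> x ⋅ b = y ⋅ d.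

Lemma eqv_refl a b : R a b -> eqv a b a b.
Proof. intro H; split; [auto|]. intros x y; split; apply Rst; auto using Rs. Qed.

Lemma eqv_sym a b c d : eqv a b c d -> eqv c d a b.
Proof.
  intros [H1 H2]; split; auto. intros x y; specialize (H2 y x). split; intro; symmetry; apply H2; auto.
Qed.

Lemma eqv_star2 a b c d : R a b -> R c d -> eqv a b c d -> star b = star d.
Proof.
  intros Hab Hcd [Hs H]. destruct (W_ex c a) as (u & v & HW).
  assert (D := W_D _ _ _ _ HW). destruct HW as (_ & _ & E & Hu).
  rewrite Hs, aas in Hu. rewrite <- Hs, aas in D.
  assert (E2 : v ⋅ b = u ⋅ d) by (apply H; auto).
  assert (Sb : star (v ⋅ b) = star b) by (apply star_fix, (Rst1 a); auto).
  assert (Sd : star (u ⋅ d) = star d) by (apply star_fix, (Rst1 c); auto).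
  rewrite <- Sb, <- Sd, E2. auto.
Qed.

Lemma eqv_swap a b c d : R a b -> R c d -> eqv a b c d -> eqv b a d c.
Proof.
  intros Hab Hcd He. split. apply (eqv_star2 a b c d); auto.
  intros x y. destruct He as [_ H]. specialize (H x y). tauto.
Qed.

Lemma half a b a' b' a'' b'' : R a b -> R a' b' -> R a'' b'' -> star a' = star a'' ->
  (forall x y, x ⋅ a' = y ⋅ a'' -> x ⋅ b' = y ⋅ b'') ->
  (forall x y, x ⋅ a = y ⋅ a' -> x ⋅ b = y ⋅ b') ->
  forall x y, x ⋅ a = y ⋅ a'' -> x ⋅ b = y ⋅ b''.
Proof.
  intros Hab Hab' Hab'' Hs H2 H1 x y Exy.
  destruct (W_ex a' a'') as (u & v & HW).
  assert (D := W_D _ _ _ _ HW). destruct HW as (_ & _ & E & Hu).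
  rewrite Hs, aas in D. rewrite <- Hs, aas in Hu.
  assert (Eb : u ⋅ b' = v ⋅ b'') by (apply H2; auto).
  destruct (W_ex y v) as (s & t & HW2). destruct HW2 as (_ & _ & E2 & Hs2).
  assert (K : s ⋅ x ⋅ a = t ⋅ u ⋅ a').
  { rewrite <- sA, Exy, sA, <- E2, <- sA, E, sA. auto. }
  apply H1 in K.
  assert (K2 : s ⋅ (x ⋅ b) = s ⋅ (y ⋅ b'')).
  { rewrite sA, K, <- sA, Eb, sA, E2, <- sA. auto. }
  apply Ls in K2.
  assert (Dv : star v ⋅ b'' = b'') by (apply (Rst1 a''); auto).
  rewrite (sA (star s) y b''), <- Hs2, <- (sA y (star v) b''), Dv in K2.
  rewrite <- K2. symmetry. apply (Rst1 (x ⋅ a)). apply Rl; auto.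
  rewrite Exy, sA, <- Hs2, <- sA, D. auto.
Qed.

Lemma eqv_trans a b c d e f : R a b -> R c d -> R e f -> eqv a b c d -> eqv c d e f -> eqv a b e f.
Proof.
  intros Hab Hcd Hef H1 H2.
  assert (S1 := eqv_star2 _ _ _ _ Hab Hcd H1).
  assert (S2 := eqv_star2 _ _ _ _ Hcd Hef H2).
  destruct H1 as [T1 H1]. destruct H2 as [T2 H2].
  split. rewrite T1; auto.
  intros x y; split.
  - apply (half a b c d e f); auto; intros; apply H2 || apply H1; auto.
  - apply (half b a d c f e); auto using Rs; intros; apply H2 || apply H1; auto.
Qed.

Lemma prodR a b c d g h : R a b -> R c d -> W b c g h -> R (g ⋅ a) (h ⋅ d).
Proof.
  intros Hab Hcd (_ & _ & H3 & _). apply Rt with (g ⋅ b). apply Rl; auto.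
  rewrite <- H3. apply Rl; auto.
Qed.

Lemma conj_wd a b a' b' g g' e : R a b -> R a' b' -> eqv a b a' b' ->
  star g ⋅ b = b ⋅ e -> star g' ⋅ b' = b' ⋅ e -> star (g ⋅ a) = star (g' ⋅ a').
Proof.
  intros Hab Hab' [Hs H] Hg Hg'.
  destruct (W_ex a' a) as (u & v & HW).
  assert (D := W_D _ _ _ _ HW). destruct HW as (_ & _ & E & Hu).
  rewrite Hs, aas in Hu. rewrite <- Hs, aas in D.
  assert (E2 : v ⋅ b = u ⋅ b') by (apply H; auto).
  assert (E3 : v ⋅ star g ⋅ b = u ⋅ star g' ⋅ b').
  { rewrite <- (sA v), Hg, sA, E2, <- (sA u b'), <- Hg', sA. auto. }
  apply H in E3.
  rewrite <- (sA v), <- (sA u), !amp, !sA, E in E3.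
  apply (cancel_star (u ⋅ a')).
  - exact E3.
  - rewrite <- E, (star_fix v a D). apply sle.
  - rewrite (star_fix u a' (eq_sym Hu)). apply sle.
Qed.

Lemma mul_wd a b c d a' b' c' d' g h g' h' :
  R a b -> R c d -> R a' b' -> R c' d' -> eqv a b a' b' -> eqv c d c' d' ->
  W b c g h -> W b' c' g' h' -> eqv (g ⋅ a) (h ⋅ d) (g' ⋅ a') (h' ⋅ d').
Proof.
  intros Hab Hcd Hab' Hcd' E1 E2 W1 W2.
  assert (E1' := E1). assert (E2' := E2).
  destruct E1' as [S1 H1]. destruct E2' as [S2 H2].
  destruct W1 as (_ & _ & K1 & L1). destruct W2 as (_ & _ & K2 & L2).
  split.
  - apply (conj_wd a b a' b' g g' (star c)); auto. rewrite S2; auto.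
  - intros x y. rewrite !sA. split; intro Z.
    + apply H1 in Z. rewrite <- !sA, <- K1, <- K2, !sA in Z.
      apply H2 in Z. auto.
    + apply H2 in Z. rewrite <- !sA, K1, K2, !sA in Z.
      apply H1 in Z. auto.
Qed.

Lemma eqL x p q r : p ⋅ q = r -> x ⋅ p ⋅ q = x ⋅ r.
Proof. intros H; rewrite <- sA, H; auto. Qed.

Lemma Rst_iff a b x y : R a b -> (x ⋅ a = y ⋅ a <-> x ⋅ b = y ⋅ b).
Proof. intro H; split; apply Rst; auto using Rs. Qed.

Lemma assoc_eqv a b c d e f g h g2 h2 g1 h1 g3 h3 :
  R a b -> R c d -> R e f -> W b c g h -> W (h ⋅ d) e g2 h2 -> W d e g1 h1 -> W b (g1 ⋅ c) g3 h3 ->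
  eqv (g2 ⋅ (g ⋅ a)) (h2 ⋅ f) (g3 ⋅ a) (h3 ⋅ (h1 ⋅ f)).
Proof.
  intros Hab Hcd Hef W0 W2 W1 W3.
  destruct W0 as (_ & _ & K & L). destruct W2 as (_ & _ & K2 & L2).
  destruct W1 as (_ & _ & K1 & L1). destruct W3 as (_ & _ & K3 & L3).
  split.
  - rewrite sA. apply (cancel_star a).
    + rewrite <- !amp. apply (Rst b a); auto using Rs.
      rewrite <- L3.
      assert (G : g ⋅ (star (g2 ⋅ g) ⋅ b) = g ⋅ (b ⋅ star (g1 ⋅ c))).
      { transitivity (star g2 ⋅ h ⋅ c).
        { rewrite sA, <- amp, <- (sA (star g2) g b), <- K, sA. auto. }
        transitivity (h ⋅ star g1 ⋅ c).
        2:{ rewrite sA, <- K, <- (sA h c), <- amp, sA. auto. }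
        apply (Rst d c); auto using Rs.
        rewrite <- (sA (star g2) h d), <- L2, <- (sA h (star g1) d), <- L1, sA. auto. }
      apply Ls in G. rewrite sA, sle' in G. rewrite G.
      rewrite sA, <- L, <- sA, sle'. auto.
    + apply sle.
    + apply sle.
  - intros x y. rewrite !sA.
    rewrite (Rst_iff a b) by auto.
    rewrite (eqL (x ⋅ g2) _ _ _ (eq_sym K)), (eqL y _ _ _ (eq_sym K3)), !sA.
    rewrite (Rst_iff c d) by auto.
    rewrite <- (sA (x ⋅ g2) h d), <- (sA x g2 (h ⋅ d)), <- (sA (y ⋅ h3) g1 d), <- K2, <- K1, !sA.
    rewrite (Rst_iff e f) by auto. tauto.
Qed.

Lemma inv1 a b g h : R a b -> W b b g h -> eqv (g ⋅ a) (h ⋅ a) a a.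
Proof.
  intros Hab (_ & _ & K & L). rewrite aas in L.
  assert (Ka : h ⋅ a = g ⋅ a) by (apply (Rst b a); auto using Rs).
  split.
  - apply star_fix. apply (Rst1 b a); auto using Rs.
  - intros x y. rewrite Ka. tauto.
Qed.

Lemma inv2 a b g h : R a b -> W a a g h -> eqv (g ⋅ a) (h ⋅ b) a b.
Proof.
  intros Hab (_ & _ & K & L). rewrite aas in L.
  assert (Kb : h ⋅ b = g ⋅ b) by (apply (Rst a b); auto).
  split.
  - apply star_fix. auto.
  - intros x y. rewrite Kb, !sA. apply Rst_iff; auto.
Qed.

Lemma idem_comm_eqv a c g h g' h' : W a c g h -> W c a g' h' -> eqv (g ⋅ a) (h ⋅ c) (g' ⋅ c) (h' ⋅ a).
Proof.
  intros W1 W2. assert (S1 := W_gb _ _ _ _ W1). assert (S2 := W_gb _ _ _ _ W2).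
  destruct W1 as (_ & _ & K & _). destruct W2 as (_ & _ & K' & _).
  split.
  - rewrite S1, S2. apply scomm.
  - intros x y. rewrite K, K'. tauto.
Qed.

Definition Rep a u := R u (u ⋅ a) /\ star u ⋅ a = a.

Lemma Rep_ex a : exists u, Rep a u.
Proof.
  destruct (W_ex a (star a)) as (g & h & H1 & H2 & H3 & H4).
  exists g. split.
  - apply Rt with h; auto. rewrite <- H3; auto.
  - rewrite ss, aas in H4. auto.
Qed.

Lemma RepR a u : Rep a u -> R (star u) a.
Proof.
  intros [H1 H2]. rewrite <- (aas u) in H1 at 1. apply A2 in H1.
  rewrite s_idem, H2 in H1. auto.
Qed.

Lemma idemR p q : R (star p) (star q) -> star p = star q.
Proof.
  intros H. assert (H' := Rs _ _ H).
  assert (E1 := proj2 (A3 _ _ H (Some (star q)) None) (s_idem q)). simpl in E1.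
  assert (E2 := proj2 (A3 _ _ H' (Some (star p)) None) (s_idem p)). simpl in E2.
  rewrite <- E1 at 1. rewrite scomm. auto.
Qed.

Lemma Rep_star a u v : Rep a u -> Rep a v -> star u = star v.
Proof. intros Hu Hv. apply idemR. apply Rt with a. apply RepR; auto. apply Rs, RepR; auto. Qed.

Lemma Rep_eqv a u v : Rep a u -> Rep a v -> eqv u (u ⋅ a) v (v ⋅ a).
Proof.
  intros Hu Hv. assert (Hs := Rep_star _ _ _ Hu Hv). split; auto.
  intros x y; split; intro Z.
  - rewrite !sA, Z; auto.
  - rewrite !sA in Z. apply (Rst a (star u)) in Z. 2: apply Rs, RepR; auto.
    rewrite <- !sA, aas, Hs, aas in Z. auto.
Qed.

Lemma Rep_starself a : Rep (star a) (star a).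
Proof. split. rewrite s_idem; apply Rr. rewrite ss, s_idem; auto. Qed.

Lemma f_hom a b u v g h : Rep a u -> Rep b v -> W (u ⋅ a) v g h ->
  Rep (a ⋅ b) (g ⋅ u) /\ h ⋅ (v ⋅ b) = g ⋅ u ⋅ (a ⋅ b).
Proof.
  intros [Hu1 Hu2] [Hv1 Hv2] (_ & _ & K & L).
  assert (Eq : h ⋅ (v ⋅ b) = g ⋅ u ⋅ (a ⋅ b)).
  { rewrite sA, K, !sA. auto. }
  split; [split|]; auto.
  - apply Rt with (g ⋅ (u ⋅ a)). apply Rl; auto.
    rewrite <- K, <- Eq. apply Rl; auto.
  - assert (G : u ⋅ (star (g ⋅ u) ⋅ (a ⋅ b)) = u ⋅ (a ⋅ b)).
    { rewrite sA, <- amp, !sA, <- (sA (star g) u a), <- L, <- (sA (u ⋅ a) (star v) b), Hv2. auto. }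
    apply Ls in G. rewrite sA, sle', (sA (star u) a b), Hu2 in G. auto.
Qed.

Lemma f_inj a b u v : Rep a u -> Rep b v -> eqv u (u ⋅ a) v (v ⋅ b) -> a = b.
Proof.
  intros [Hu1 Hu2] [Hv1 Hv2] [Hs H].
  destruct (W_ex v u) as (s & t & _ & _ & E & L).
  rewrite Hs, aas in L.
  assert (E2 : t ⋅ (u ⋅ a) = s ⋅ (v ⋅ b)) by (apply H; auto).
  rewrite sA, E, !sA in E2. apply Ls in E2.
  rewrite (star_fix s v (eq_sym L)) in E2. rewrite <- Hs, Hu2 in E2.
  rewrite E2. rewrite Hs; auto.
Qed.

Lemma f_R a b u v : Rep a u -> Rep b v -> (R a b <-> star u = star v).
Proof.
  intros Hu Hv. split; intro H.
  - apply idemR. apply Rt with a. apply RepR; auto. apply Rt with b; auto. apply Rs, RepR; auto.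
  - apply Rt with (star u). apply Rs, RepR; auto. rewrite H. apply RepR; auto.
Qed.

Lemma straight_eqv a b u v g h : R a b -> Rep a u -> Rep b v -> W u v g h ->
  eqv (g ⋅ (u ⋅ a)) (h ⋅ (v ⋅ b)) a b.
Proof.
  intros Hab Hu Hv (_ & _ & K & L).
  assert (Hs := proj1 (f_R a b u v Hu Hv) Hab).
  rewrite <- Hs, aas in L.
  split.
  - rewrite sA. apply star_fix. rewrite (star_fix g u (eq_sym L)). apply Hu.
  - intros x y. rewrite (sA h v b), K, !sA. apply Rst_iff; auto.
Qed.

Lemma pair_diag p q : star p = star q -> eqv p p q q.
Proof. intros H; split; auto. tauto. Qed.

Definition cls a b : S -> S -> Prop := fun c d => R c d /\ eqv a b c d.

Lemma cls_eq a b c d : R a b -> R c d -> eqv a b c d -> cls a b = cls c d.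
Proof.
  intros Hab Hcd H. apply functional_extensionality; intro x; apply functional_extensionality; intro y.
  apply propositional_extensionality. unfold cls; split; intros [Hxy E]; split; auto.
  - apply (eqv_trans c d a b x y); auto. apply eqv_sym; auto.
  - apply (eqv_trans a b c d x y); auto.
Qed.

Lemma cls_inv a b c d : R c d -> cls a b = cls c d -> eqv a b c d.
Proof.
  intros Hcd E. assert (H : cls c d c d) by (split; auto; apply eqv_refl; auto).
  rewrite <- E in H. apply H.
Qed.

Definition QT := {C : S -> S -> Prop | exists a b, R a b /\ C = cls a b}.

Lemma Qext (p q : QT) : proj1_sig p = proj1_sig q -> p = q.
Proof. destruct p, q; simpl; intros; subst; f_equal; apply proof_irrelevance. Qed.

Definition mkQ a b (H : R a b) : QT :=
  exist _ (cls a b) (ex_intro _ a (ex_intro _ b (conj H eq_refl))).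

Definition repr (p : QT) a b := R a b /\ proj1_sig p = cls a b.

Lemma repr_ex (p : QT) : exists ab : S * S, repr p (fst ab) (snd ab).
Proof. destruct p as [C [a [b [H E]]]]. exists (a, b). split; auto. Qed.

Definition getrep (p : QT) := constructive_indefinite_description _ (repr_ex p).

Lemma W_ex' b c : exists gh : S * S, W b c (fst gh) (snd gh).
Proof. destruct (W_ex b c) as (g & h & H). exists (g, h); auto. Qed.

Definition getW b c := constructive_indefinite_description _ (W_ex' b c).

Lemma repr_eq p q a b c d : repr p a b -> repr q c d -> eqv a b c d -> p = q.
Proof.
  intros [H1 E1] [H2 E2] E. apply Qext. rewrite E1, E2. apply cls_eq; auto.
Qed.

Lemma repr_eqv p a b c d : repr p a b -> repr p c d -> eqv a b c d.
Proof. intros [H1 E1] [H2 E2]. apply cls_inv; auto. rewrite <- E1, <- E2; auto. Qed.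

Lemma repr_change p a b c d : repr p a b -> R c d -> eqv a b c d -> repr p c d.
Proof. intros [H1 E1] H2 E. split; auto. rewrite E1. apply cls_eq; auto. Qed.

Lemma repr_mk a b H : repr (mkQ a b H) a b.
Proof. split; auto. Qed.

Definition mulQ (p q : QT) : QT :=
  let rp := getrep p in let rq := getrep q in
  let w := getW (snd (proj1_sig rp)) (fst (proj1_sig rq)) in
  mkQ (fst (proj1_sig w) ⋅ fst (proj1_sig rp)) (snd (proj1_sig w) ⋅ snd (proj1_sig rq))
      (prodR _ _ _ _ _ _ (proj1 (proj2_sig rp)) (proj1 (proj2_sig rq)) (proj2_sig w)).

Lemma mul_spec p q a b c d g h : repr p a b -> repr q c d -> W b c g h ->
  repr (mulQ p q) (g ⋅ a) (h ⋅ d).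
Proof.
  intros Hp Hq Hw. unfold mulQ.
  destruct (getrep p) as [[a0 b0] Hp0]. destruct (getrep q) as [[c0 d0] Hq0]. simpl.
  destruct (getW b0 c0) as [[g0 h0] Hw0]. simpl.
  assert (E1 := repr_eqv _ _ _ _ _ Hp0 Hp). assert (E2 := repr_eqv _ _ _ _ _ Hq0 Hq).
  assert (Hab0 := proj1 Hp0). assert (Hcd0 := proj1 Hq0). assert (Hab := proj1 Hp). assert (Hcd := proj1 Hq).
  split. apply (prodR a b c d); auto.
  simpl. apply cls_eq. apply (prodR a0 b0 c0 d0); auto. apply (prodR a b c d); auto.
  apply (mul_wd a0 b0 c0 d0 a b c d); auto.
Qed.

Definition invQ (p : QT) : QT :=
  let rp := getrep p in mkQ (snd (proj1_sig rp)) (fst (proj1_sig rp)) (Rs _ _ (proj1 (proj2_sig rp))).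

Lemma inv_spec p a b : repr p a b -> repr (invQ p) b a.
Proof.
  intros Hp. unfold invQ. destruct (getrep p) as [[a0 b0] Hp0]. simpl.
  assert (E1 := repr_eqv _ _ _ _ _ Hp0 Hp).
  assert (Hab0 := proj1 Hp0). assert (Hab := proj1 Hp).
  split. apply Rs; auto. simpl. apply cls_eq; auto using Rs. apply eqv_swap; auto.
Qed.

Definition getRep a := constructive_indefinite_description _ (Rep_ex a).

Definition fQ a : QT := let u := getRep a in mkQ (proj1_sig u) (proj1_sig u ⋅ a) (proj1 (proj2_sig u)).

Lemma f_spec a u : Rep a u -> repr (fQ a) u (u ⋅ a).
Proof.
  intros Hu. unfold fQ. destruct (getRep a) as [u0 Hu0]. simpl.
  split. apply Hu. simpl. apply cls_eq. apply Hu0. apply Hu. apply Rep_eqv; auto.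
Qed.

Lemma repr_some p : exists a b, repr p a b.
Proof. destruct (repr_ex p) as [[a b] H]. eauto. Qed.

Lemma getW' b c : exists g h, W b c g h.
Proof. apply W_ex. Qed.

Lemma QA p q r : mulQ p (mulQ q r) = mulQ (mulQ p q) r.
Proof.
  destruct (repr_some p) as (a & b & Hp). destruct (repr_some q) as (c & d & Hq).
  destruct (repr_some r) as (e & f & Hr).
  destruct (getW' b c) as (g & h & W0).
  destruct (getW' d e) as (g1 & h1 & W1).
  destruct (getW' (h ⋅ d) e) as (g2 & h2 & W2).
  destruct (getW' b (g1 ⋅ c)) as (g3 & h3 & W3).
  assert (Hpq := mul_spec _ _ _ _ _ _ _ _ Hp Hq W0).
  assert (Hqr := mul_spec _ _ _ _ _ _ _ _ Hq Hr W1).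
  assert (H1 := mul_spec _ _ _ _ _ _ _ _ Hpq Hr W2).
  assert (H2 := mul_spec _ _ _ _ _ _ _ _ Hp Hqr W3).
  apply (repr_eq _ _ _ _ _ _ H2 H1). apply eqv_sym.
  apply (assoc_eqv a b c d e f g h g2 h2 g1 h1 g3 h3); auto. apply Hp. apply Hq. apply Hr.
Qed.

Lemma QL1 p : mulQ (mulQ p (invQ p)) p = p.
Proof.
  destruct (repr_some p) as (a & b & Hp). assert (Hab := proj1 Hp).
  assert (Hi := inv_spec _ _ _ Hp).
  destruct (getW' b b) as (g & h & W0).
  assert (H1 := mul_spec _ _ _ _ _ _ _ _ Hp Hi W0).
  assert (H1' := repr_change _ _ _ a a H1 (Rr a) (inv1 _ _ _ _ Hab W0)).
  destruct (getW' a a) as (g' & h' & W1).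
  assert (H2 := mul_spec _ _ _ _ _ _ _ _ H1' Hp W1).
  apply (repr_eq _ _ _ _ _ _ H2 Hp). apply inv2; auto.
Qed.

Lemma QL2 p : invQ (invQ p) = p.
Proof.
  destruct (repr_some p) as (a & b & Hp).
  apply (repr_eq _ _ _ _ _ _ (inv_spec _ _ _ (inv_spec _ _ _ Hp)) Hp). apply eqv_refl, Hp.
Qed.

Lemma QL3 p q : invQ (mulQ p q) = mulQ (invQ q) (invQ p).
Proof.
  destruct (repr_some p) as (a & b & Hp). destruct (repr_some q) as (c & d & Hq).
  destruct (getW' b c) as (g & h & W0).
  assert (H1 := inv_spec _ _ _ (mul_spec _ _ _ _ _ _ _ _ Hp Hq W0)).
  assert (H2 := mul_spec _ _ _ _ _ _ _ _ (inv_spec _ _ _ Hq) (inv_spec _ _ _ Hp) (W_swap _ _ _ _ W0)).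
  apply (repr_eq _ _ _ _ _ _ H1 H2). apply eqv_refl. apply H1.
Qed.

Lemma pp_spec p a b : repr p a b -> repr (mulQ p (invQ p)) a a.
Proof.
  intros Hp. assert (Hab := proj1 Hp).
  destruct (getW' b b) as (g & h & W0).
  assert (H1 := mul_spec _ _ _ _ _ _ _ _ Hp (inv_spec _ _ _ Hp) W0).
  apply (repr_change _ _ _ a a H1 (Rr a) (inv1 _ _ _ _ Hab W0)).
Qed.

Lemma QL4 p q : mulQ (mulQ p (invQ p)) (mulQ q (invQ q)) = mulQ (mulQ q (invQ q)) (mulQ p (invQ p)).
Proof.
  destruct (repr_some p) as (a & b & Hp). destruct (repr_some q) as (c & d & Hq).
  assert (P1 := pp_spec _ _ _ Hp). assert (P2 := pp_spec _ _ _ Hq).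
  destruct (getW' a c) as (g & h & W0). destruct (getW' c a) as (g' & h' & W1).
  apply (repr_eq _ _ _ _ _ _ (mul_spec _ _ _ _ _ _ _ _ P1 P2 W0) (mul_spec _ _ _ _ _ _ _ _ P2 P1 W1)).
  apply idem_comm_eqv; auto.
Qed.

Lemma backward : straight_left_Iquotients_with mul star R.
Proof.
  assert (HI : inverse_semigroup mulQ invQ).
  { apply mk_inverse. apply QA. apply QL1. apply QL2. apply QL3. apply QL4. }
  exists QT, mulQ, invQ, fQ.
  assert (RU : forall a, exists u, Rep a u) by apply Rep_ex.
  assert (GR : forall a b, greenR mulQ (fQ a) (fQ b) <-> R a b).
  { intros a b. destruct (RU a) as [u Hu]. destruct (RU b) as [v Hv].
    rewrite (greenR_iff QT mulQ invQ HI). rewrite (f_R a b u v Hu Hv).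
    assert (P1 := pp_spec _ _ _ (f_spec a u Hu)). assert (P2 := pp_spec _ _ _ (f_spec b v Hv)).
    split; intro H.
    - rewrite H in P1. apply (repr_eqv _ _ _ _ _ P1 P2).
    - apply (repr_eq _ _ _ _ _ _ P1 P2). apply pair_diag; auto. }
  split; [|split; [|split; [|split; [|split]]]].
  - exact HI.
  - intros a b E. destruct (RU a) as [u Hu]. destruct (RU b) as [v Hv].
    assert (P1 := f_spec a u Hu). assert (P2 := f_spec b v Hv). rewrite E in P1.
    apply (f_inj a b u v Hu Hv). apply (repr_eqv _ _ _ _ _ P1 P2).
  - intros a b. destruct (RU a) as [u Hu]. destruct (RU b) as [v Hv].
    destruct (getW' (u ⋅ a) v) as (g & h & W0).
    assert (P := mul_spec _ _ _ _ _ _ _ _ (f_spec a u Hu) (f_spec b v Hv) W0).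
    destruct (f_hom a b u v g h Hu Hv W0) as [Hr Eq].
    rewrite Eq in P.
    apply (repr_eq _ _ _ _ _ _ (f_spec _ _ Hr) P). apply eqv_refl. apply P.
  - intros q. destruct (repr_some q) as (a & b & Hq).
    exists a, b. split.
    + destruct (RU a) as [u Hu]. destruct (RU b) as [v Hv].
      destruct (getW' u v) as (g & h & W0).
      assert (P := mul_spec _ _ _ _ _ _ _ _ (inv_spec _ _ _ (f_spec a u Hu)) (f_spec b v Hv) W0).
      apply (repr_eq _ _ _ _ _ _ Hq P). apply eqv_sym. apply straight_eqv; auto. apply Hq.
    + apply GR. apply Hq.
  - intros a. destruct (RU a) as [u Hu]. destruct (RU (star a)) as [w Hw].
    destruct (getW' u u) as (g & h & W0).
    assert (Hua : R (u ⋅ a) u) by (apply Rs, Hu).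
    assert (P := mul_spec _ _ _ _ _ _ _ _ (inv_spec _ _ _ (f_spec a u Hu)) (f_spec a u Hu) W0).
    assert (P' := repr_change _ _ _ (u ⋅ a) (u ⋅ a) P (Rr _) (inv1 _ _ _ _ Hua W0)).
    assert (Pf := repr_change _ _ _ (star a) (star a ⋅ star a) (f_spec _ _ Hw)
                    (proj1 (Rep_starself a)) (Rep_eqv _ _ _ Hw (Rep_starself a))).
    apply (repr_eq _ _ _ _ _ _ Pf P'). rewrite s_idem. apply pair_diag.
    rewrite ss. symmetry. apply star_fix. apply Hu.
  - exact GR.
Qed.

End Ample.

Section Forward.
Variable S : Type.
Variable mul : S -> S -> S.
Variable star : S -> S.
Variable R : S -> S -> Prop.
Variable Q : Type.
Variable m : Q -> Q -> Q.
Variable i : Q -> Q.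
Variable f : S -> Q.
Hypothesis HI : inverse_semigroup m i.
Hypothesis finj : forall a b, f a = f b -> a = b.
Hypothesis fhom : forall a b, f (mul a b) = m (f a) (f b).
Hypothesis fstr : forall q : Q, exists a b : S, q = m (i (f a)) (f b) /\ greenR m (f a) (f b).
Hypothesis fstar : forall a, f (star a) = m (i (f a)) (f a).
Hypothesis fR : forall a b, greenR m (f a) (f b) <-> R a b.
Local Infix "⋅" := m (at level 40, left associativity).

Let mA := iA Q m i HI.
Let gi := greenR_iff Q m i HI.

Lemma F_lc : left_congruence mul R.
Proof.
  split; [|split; [|split]].
  - intros a. apply fR, gi. auto.
  - intros a b H. apply fR, gi. apply fR, gi in H. auto.
  - intros a b c H1 H2. apply fR, gi. apply fR, gi in H1. apply fR, gi in H2. congruence.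
  - intros a b c H. apply fR. rewrite !fhom. apply (greenR_left Q m i HI); auto. apply fR; auto.
Qed.

Lemma F_A2 : forall alpha beta gamma : S,
      R (mul gamma alpha) (mul gamma beta) ->
      R (mul (star gamma) alpha) (mul (star gamma) beta).
Proof.
  intros a b c H. apply fR. apply fR in H. rewrite !fhom, fstar, <- !mA. apply (greenR_left Q m i HI); auto.
  rewrite <- !fhom; auto.
Qed.

Definition F (x : option S) (q : Q) := match x with Some x => f x ⋅ q | None => q end.

Lemma F_l x a : f (lmul1 mul x a) = F x (f a).
Proof. destruct x; simpl; auto. Qed.

Lemma F_r x q z : F x (rmul1 m q z) = rmul1 m (F x q) z.
Proof. destruct x, z; simpl; auto. Qed.

Lemma F_A3 : forall a b : S, R a b -> Rstar mul a b.
Proof.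
  intros a b H. apply fR in H. destruct H as [[z Hz] [w Hw]].
  intros x y. split; intro E; apply finj; apply (f_equal f) in E; rewrite !F_l in *.
  - rewrite Hw, !F_r, E. auto.
  - rewrite Hz, !F_r, E. auto.
Qed.

Lemma F_A1 : forall alpha beta : S, exists gamma delta : S,
      R gamma delta /\ R delta (mul delta beta) /\
      mul delta beta = mul gamma alpha /\
      mul alpha (star beta) = mul (star gamma) alpha.
Proof.
  intros al be. destruct (fstr (f al ⋅ i (f be))) as (ga & de & Eq & G).
  exists ga, de.
  set (a := f ga) in *. set (b := f de) in *. set (A := f al) in *. set (B := f be) in *.
  assert (G' := proj1 (gi _ _) G).
  assert (C1 : A ⋅ (i B ⋅ B) = i a ⋅ a ⋅ A).
  { assert (K : i a ⋅ a = A ⋅ i B ⋅ B ⋅ i A).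
    { transitivity ((i a ⋅ b) ⋅ i (i a ⋅ b)).
      - rewrite (i_mul Q m i HI), (ii Q m i HI), mA. rewrite <- (mA _ b (i b)), <- G'.
        rewrite (mA (i a) a (i a)), (iR Q m i HI). auto.
      - rewrite <- Eq, (i_mul Q m i HI), (ii Q m i HI). rewrite !mA. auto. }
    rewrite K. rewrite <- (mA (A ⋅ i B ⋅ B) (i A) A).
    rewrite <- (mA A (i B) B), <- (mA A (i B ⋅ B) (i A ⋅ A)).
    rewrite (idem_comm Q m i HI (i B ⋅ B) (i A ⋅ A)) by (apply ia_idem; auto).
    rewrite (mA A (i A ⋅ A) (i B ⋅ B)), (mA A (i A) A), (iL Q m i HI). auto. }
  assert (C2 : b ⋅ B = a ⋅ A).
  { transitivity (a ⋅ (i a ⋅ a ⋅ A)).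
    2:{ rewrite !mA, (iL Q m i HI). auto. }
    rewrite <- C1, mA, mA, <- (mA a A (i B)), Eq, mA, G'.
    rewrite (iL Q m i HI). auto. }
  split; [|split; [|split]].
  - apply fR; auto.
  - apply fR. rewrite fhom. fold b B. split.
    + exists (Some (i B)). simpl. rewrite C2, <- mA, Eq, mA, G', (iL Q m i HI). auto.
    + exists (Some B). simpl. auto.
  - apply finj. rewrite !fhom. exact C2.
  - apply finj. rewrite !fhom, !fstar. exact C1.
Qed.
End Forward.

Theorem theorem4p6 (S : Type) (mul : S -> S -> S) (star : S -> S)
    (Hample : right_ample mul star) (R' : S -> S -> Prop) :
  straight_left_Iquotients_with mul star R' <->
  (left_congruence mul R' /\
   (* (A1) *)
   (forall alpha beta : S, exists gamma delta : S,
      R' gamma delta /\ R' delta (mul delta beta) /\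
      mul delta beta = mul gamma alpha /\
      mul alpha (star beta) = mul (star gamma) alpha) /\
   (* (A2) *)
   (forall alpha beta gamma : S,
      R' (mul gamma alpha) (mul gamma beta) ->
      R' (mul (star gamma) alpha) (mul (star gamma) beta)) /\
   (* (A3) *)
   (forall a b : S, R' a b -> Rstar mul a b)).
Proof.
  split.
  - intros (Q & m & i & f & HI & finj & fhom & fstr & fstar & fR).
    split; [|split; [|split]].
    + exact (F_lc S mul R' Q m i f HI fhom fR).
    + exact (F_A1 S mul star R' Q m i f HI finj fhom fstr fstar fR).
    + exact (F_A2 S mul star R' Q m i f HI fhom fstar fR).
    + exact (F_A3 S mul R' Q m i f HI finj fhom fR).
  - intros (Hlc & HA1 & HA2 & HA3).
    exact (backward S mul star R' Hample Hlc HA1 HA2 HA3).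
Qed.
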